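(* Let $\xi$ be a positive real number, let $\varepsilon$ be a real number with $0<\varepsilon<1$, and let $(a_n)_{n\ge1}$ be a sequence of real numbers with $0\le a_n<1-\varepsilon$ for all $n\ge1$. Then the set of real numbers $\alpha$ such that $$a_n \le \{\xi \alpha^n\} \le a_n + \varepsilon \quad \text{for every } n\ge 1$$ has Hausdorff dimension $1$.
   Context: For a real number $x$, $\{x\}$ denotes its fractional part $x-\lfloor x\rfloor$. *)

(* Defs.v *)
From Stdlib Require Import Reals ClassicalEpsilon.
From Coquelicot Require Import Coquelicot.
Open Scope R_scope.

(* Fractional part {x}: Stdlib's R_Ifp.frac_part x = x - IZR (Int_part x),
   where Int_part x = up x - 1 is the floor. *)

Definition diam (U : R -> Prop) : Rbar :=
  Lub_Rbar (fun r => exists x y, U x /\ U y /\ r = Rabs (x - y)).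

(* |U|^s, with the usual conventions: |empty|^s = 0; for nonempty U of
   diameter 0, |U|^s = 1 if s = 0 and 0 if s > 0. Only used for bounded U. *)
Definition diam_pow (U : R -> Prop) (s : R) : R :=
  match diam U with
  | Finite d =>
      if Req_EM_T d 0 then
        (if Req_EM_T s 0 then
           (if excluded_middle_informative (exists x, U x) then 1 else 0)
         else 0)
      else Rpower d s
  | _ => 0
  end.

Definition nonneg_sum (u : nat -> R) : Rbar :=
  Lim_seq (fun N => sum_n u N).

Definition delta_cover (E : R -> Prop) (delta : R) (U : nat -> R -> Prop) : Prop :=
  (forall n, Rbar_le (diam (U n)) (Finite delta)) /\
  (forall x, E x -> exists n, U n x).

Definition hausdorff_content (s delta : R) (E : R -> Prop) : Rbar :=
  Glb_Rbar (fun v => exists U, delta_cover E delta U /\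
                     Finite v = nonneg_sum (fun n => diam_pow (U n) s)).

Definition hausdorff_measure (s : R) (E : R -> Prop) : Rbar :=
  Lub_Rbar (fun v => exists delta, 0 < delta /\
                     Rbar_le (Finite v) (hausdorff_content s delta E)).

Definition hausdorff_dim (E : R -> Prop) : Rbar :=
  Glb_Rbar (fun s => 0 <= s /\ hausdorff_measure s E = Finite 0).

(* Main.v *)
Require Import Defs.
From Stdlib Require Import Reals Lra Lia ClassicalEpsilon List ZArith.
From Coquelicot Require Import Coquelicot.
Open Scope R_scope.

Lemma pow_mvt (m : nat) (x y : R) : 0 <= x <= y ->
  INR (S m) * x ^ m * (y - x) <= y ^ (S m) - x ^ (S m) <= INR (S m) * y ^ m * (y - x).
Proof.
  intros [Hx Hxy]. induction m as [|m IH].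
  - simpl. lra.
  - assert (Hxm : 0 <= x ^ m) by (apply pow_le; lra).
    assert (Hym : x ^ m <= y ^ m) by (apply pow_incr; lra).
    assert (Hxm1 : 0 <= x ^ S m) by (apply pow_le; lra).
    assert (Hym1 : x ^ S m <= y ^ S m) by (apply pow_incr; lra).
    replace (y ^ S (S m) - x ^ S (S m)) with (y * (y ^ S m - x ^ S m) + x ^ S m * (y - x))
      by (simpl; ring).
    rewrite S_INR. destruct IH as [IH1 IH2]. split.
    + assert (x * (INR (S m) * x ^ m * (y - x)) <= y * (y ^ S m - x ^ S m)).
      { apply Rmult_le_compat; try lra. apply Rmult_le_pos; [apply Rmult_le_pos|]; try lra.
        apply pos_INR. }
      replace ((INR (S m) + 1) * x ^ S m * (y - x)) with
        (x * (INR (S m) * x ^ m * (y - x)) + x ^ S m * (y - x)) by (simpl; ring).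
      lra.
    + assert (y * (y ^ S m - x ^ S m) <= y * (INR (S m) * y ^ m * (y - x))).
      { apply Rmult_le_compat_l; lra. }
      assert (x ^ S m * (y - x) <= y ^ S m * (y - x)).
      { apply Rmult_le_compat_r; lra. }
      replace ((INR (S m) + 1) * y ^ S m * (y - x)) with
        (y * (INR (S m) * y ^ m * (y - x)) + y ^ S m * (y - x)) by (simpl; ring).
      lra.
Qed.

Lemma pow_lt_mono (m : nat) (x y : R) : (1 <= m)%nat -> 0 <= x < y -> x ^ m < y ^ m.
Proof.
  intros Hm Hxy. destruct m as [|m]; [lia|].
  destruct (pow_mvt m x y) as [H1 _]; [lra|].
  assert (0 < INR (S m) * x ^ m * (y - x) \/ x = 0) as [H|H].
  { destruct (Req_dec x 0); [now right|left].
    apply Rmult_lt_0_compat; [apply Rmult_lt_0_compat|]; try lra.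
    apply lt_0_INR; lia. apply pow_lt; lra. }
  - lra.
  - subst. rewrite pow_i by lia. apply pow_lt; lra.
Qed.

Lemma pow_le_mono (m : nat) (x y : R) : 0 <= x <= y -> x ^ m <= y ^ m.
Proof. intros. apply pow_incr; lra. Qed.

Lemma pow_le_inv (m : nat) (x y : R) : (1 <= m)%nat -> 0 <= x -> 0 <= y -> x ^ m <= y ^ m -> x <= y.
Proof.
  intros Hm Hx Hy H. destruct (Rle_lt_dec x y) as [|Hlt]; auto.
  pose proof (pow_lt_mono m y x Hm (conj Hy Hlt)). lra.
Qed.

Lemma pow_lt_inv (m : nat) (x y : R) : (1 <= m)%nat -> 0 <= x -> 0 <= y -> x ^ m < y ^ m -> x < y.
Proof.
  intros Hm Hx Hy H. destruct (Rlt_le_dec x y) as [|Hle]; auto.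
  pose proof (pow_le_mono m y x (conj Hy Hle)). lra.
Qed.

Definition root (m : nat) (y : R) : R := Rpower y (/ INR m).

Lemma root_spec (m : nat) (y : R) : (1 <= m)%nat -> 0 < y -> 0 < root m y /\ (root m y) ^ m = y.
Proof.
  intros Hm Hy. unfold root. split.
  - unfold Rpower. apply exp_pos.
  - rewrite <- Rpower_pow by (unfold Rpower; apply exp_pos).
    rewrite Rpower_mult. rewrite Rinv_l. apply Rpower_1; auto.
    apply not_0_INR; lia.
Qed.

Lemma frac_int_plus (K : Z) (v : R) : 0 <= v < 1 -> frac_part (IZR K + v) = v.
Proof.
  intros Hv. unfold frac_part, Int_part.
  assert (H : (K + 1)%Z = up (IZR K + v)).
  { apply tech_up; rewrite plus_IZR; lra. }
  rewrite <- H. rewrite minus_IZR, plus_IZR. ring.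
Qed.

Lemma diam_pts (U : R -> Prop) (d : R) x y : diam U = Finite d -> U x -> U y -> Rabs (x - y) <= d.
Proof.
  intros Hd Hx Hy. pose proof (Lub_Rbar_correct (fun r => exists x y, U x /\ U y /\ r = Rabs (x - y))) as [Hub _].
  unfold diam in Hd. rewrite Hd in Hub. apply (Hub (Rabs (x - y))). eauto.
Qed.

Lemma diam_interval (u h : R) : 0 <= h -> diam (fun x => u <= x <= u + h) = Finite h.
Proof.
  intros Hh. unfold diam. apply is_lub_Rbar_unique. split.
  - intros r (x & y & Hx & Hy & ->). simpl. apply Rabs_le. lra.
  - intros b Hb. apply (Hb h). exists (u + h), u. repeat split; try lra.
    replace (u + h - u) with h by ring. rewrite Rabs_pos_eq; lra.
Qed.

Lemma diam_pow_nonneg (U : R -> Prop) (s : R) : 0 <= diam_pow U s.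
Proof.
  unfold diam_pow. destruct (diam U); try lra.
  destruct (Req_EM_T r 0); [|unfold Rpower; left; apply exp_pos].
  destruct (Req_EM_T s 0); try lra.
  destruct (excluded_middle_informative _); lra.
Qed.

Lemma diam_pow_ge (U : R -> Prop) (s : R) x y : 0 <= s -> Rbar_le (diam U) (Finite 1) ->
  U x -> U y -> x <> y -> Rpower (Rabs (x - y)) s <= diam_pow U s.
Proof.
  intros Hs Hd Hx Hy Hxy.
  pose proof (Lub_Rbar_correct (fun r => exists x y, U x /\ U y /\ r = Rabs (x - y))) as [Hub _].
  assert (Hpos : 0 < Rabs (x - y)) by (apply Rabs_pos_lt; lra).
  unfold diam_pow. unfold diam in Hd |- *.
  destruct (Lub_Rbar _) as [d| |] eqn:E.
  - assert (Hle : Rabs (x - y) <= d) by (apply (Hub (Rabs (x - y))); eauto).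
    destruct (Req_EM_T d 0); [lra|].
    apply Rle_Rpower_l; lra.
  - simpl in Hd. contradiction.
  - exfalso. apply (Hub (Rabs (x - y))). eauto.
Qed.


Definition fsum (f : nat -> R) (l : list nat) : R := fold_right (fun i acc => f i + acc) 0 l.

Lemma fsum_nonneg f l : (forall i, 0 <= f i) -> 0 <= fsum f l.
Proof. intros H; induction l; simpl; [lra|]. specialize (H a). lra. Qed.

Lemma fsum_remove f l i : (forall i, 0 <= f i) -> In i l ->
  f i + fsum f (remove Nat.eq_dec i l) <= fsum f l.
Proof.
  intros Hf. induction l as [|j l IH]; simpl; [tauto|].
  intros [->|Hin].
  - destruct (Nat.eq_dec i i) as [_|]; [|congruence].
    assert (forall l', fsum f (remove Nat.eq_dec i l') <= fsum f l').
    { induction l' as [|k l' IH']; simpl; [lra|].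
      destruct (Nat.eq_dec i k); simpl; pose proof (Hf k); lra. }
    specialize (H l). lra.
  - destruct (Nat.eq_dec i j); simpl.
    + subst. assert (forall l', fsum f (remove Nat.eq_dec j l') <= fsum f l').
      { induction l' as [|k l' IH']; simpl; [lra|].
        destruct (Nat.eq_dec j k); simpl; pose proof (Hf k); lra. }
      specialize (H l). pose proof (Hf j). lra.
    + specialize (IH Hin). lra.
Qed.

Lemma finite_cover (lo hi : nat -> R) (b : R) : (forall i, lo i <= hi i) ->
  forall n l x, (length l <= n)%nat -> x <= b ->
  (forall y, x <= y <= b -> exists i, In i l /\ lo i < y < hi i) ->
  b - x <= fsum (fun i => hi i - lo i) l.
Proof.
  intros Hlh n. induction n as [|n IH]; intros l x Hlen Hxb Hcov.
  - destruct l; simpl in Hlen; [|lia].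
    destruct (Hcov x) as (i & [] & _). lra.
  - destruct (Hcov x) as (i & Hin & Hlo & Hhi); [lra|].
    assert (Hnn : forall i, 0 <= hi i - lo i) by (intros j; specialize (Hlh j); lra).
    pose proof (fsum_remove (fun i => hi i - lo i) l i Hnn Hin) as Hrem. simpl in Hrem.
    destruct (Rlt_le_dec b (hi i)) as [Hb|Hb].
    + pose proof (fsum_nonneg (fun i => hi i - lo i) (remove Nat.eq_dec i l) Hnn). lra.
    + assert (IH' : b - hi i <= fsum (fun i => hi i - lo i) (remove Nat.eq_dec i l)).
      { apply IH; auto.
        - pose proof (remove_length_lt Nat.eq_dec l i Hin). lia.
        - intros y Hy. destruct (Hcov y) as (j & Hj & Hj1 & Hj2); [lra|].
          exists j. split; auto. apply in_in_remove; auto.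
          intros ->. lra. }
      lra.
Qed.

Lemma fsum_app f l1 l2 : fsum f (l1 ++ l2) = fsum f l1 + fsum f l2.
Proof. induction l1; simpl; [lra|]. rewrite IHl1. lra. Qed.

Lemma fsum_seq f N : sum_n f N = fsum f (seq 0 (S N)).
Proof.
  induction N.
  - rewrite sum_O. simpl. rewrite Rplus_0_r. reflexivity.
  - rewrite sum_Sn, IHN. rewrite (seq_S (S N)), fsum_app.
    change (fsum f ((0 + S N)%nat :: nil)) with (f (0 + S N)%nat + 0).
    change plus with Rplus. rewrite Rplus_0_r. reflexivity.
Qed.

Lemma geom_half N : sum_n (fun i => (/2) ^ i) N = 2 - (/2) ^ N.
Proof.
  induction N.
  - rewrite sum_O. simpl. lra.
  - rewrite sum_Sn, IHN. change plus with Rplus. simpl. lra.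
Qed.

Lemma list_nat_bound (l : list R) : (forall x, In x l -> exists n, x = INR n) ->
  exists N, forall x, In x l -> exists n, (n <= N)%nat /\ x = INR n.
Proof.
  induction l as [|x l IH]; intros H.
  - exists 0%nat. simpl. tauto.
  - destruct IH as [N HN]. { intros y Hy. apply H. now right. }
    destruct (H x (or_introl eq_refl)) as [n Hn].
    exists (Nat.max N n). intros y [<-|Hy].
    + exists n. split; [lia|auto].
    + destruct (HN y Hy) as (m & Hm & ->). exists m. split; [lia|auto].
Qed.

Lemma cover_lemma (w : nat -> R) (V : nat -> R -> Prop) (B : R) :
  (forall n, 0 <= w n) ->
  (forall n x y, V n x -> V n y -> Rabs (x - y) <= w n) ->
  (forall t, 0 <= t <= /2 -> exists n, V n t) ->
  (forall N, sum_n w N <= B) -> /4 <= B.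
Proof.
  intros Hw Hdiam Hcov HB.
  destruct (Rlt_le_dec B (/4)) as [HBlt|]; [|auto]. exfalso.
  set (eta := (/4 - B) / 4).
  assert (Heta : 0 < eta) by (unfold eta; lra).
  set (p := fun n => epsilon (inhabits 0) (V n)).
  set (lo := fun n => p n - w n - eta * (/2) ^ n).
  set (hi := fun n => p n + w n + eta * (/2) ^ n).
  assert (Hpow : forall n, 0 < (/2) ^ n) by (intros; apply pow_lt; lra).
  assert (Hlh : forall i, lo i <= hi i).
  { intros i. unfold lo, hi. specialize (Hw i). specialize (Hpow i). nra. }
  assert (Hin : forall n t, V n t -> lo n < t < hi n).
  { intros n t Ht. assert (Hp : V n (p n)) by (apply epsilon_spec; eauto).
    specialize (Hdiam n t (p n) Ht Hp). apply Rabs_le_between in Hdiam.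
    specialize (Hpow n). unfold lo, hi. nra. }
  assert (Hfc : forall x, (exists y, (fun x y => exists n, x = INR n /\ lo n < y < hi n) x y) ->
                  (fun x => exists n, x = INR n) x).
  { intros x [y [n [Hn _]]]. eauto. }
  set (fam := mkfamily (fun x => exists n, x = INR n)
                (fun x y => exists n, x = INR n /\ lo n < y < hi n) Hfc).
  destruct (compact_P3 0 (/2) fam) as [D [HDcov HDfin]].
  - split.
    + intros t Ht. destruct (Hcov t Ht) as [n Hn]. exists (INR n). simpl. exists n. split; auto.
    + intros x y Hy. simpl in Hy. destruct Hy as [n [Hxn Hn]].
      assert (Hd : 0 < Rmin (y - lo n) (hi n - y)) by (apply Rmin_pos; lra).
      exists (mkposreal _ Hd). intros z Hz. unfold disc in Hz. simpl in Hz. simpl.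
      exists n. split; auto.
      pose proof (Rmin_l (y - lo n) (hi n - y)). pose proof (Rmin_r (y - lo n) (hi n - y)).
      apply Rabs_lt_between in Hz. lra.
  - destruct HDfin as [l Hl].
    destruct (list_nat_bound l) as [N HN].
    { intros x Hx. apply Hl in Hx. destruct Hx as [Hx _]. exact Hx. }
    assert (Hcov2 : forall y, 0 <= y <= /2 -> exists i, In i (seq 0 (S N)) /\ lo i < y < hi i).
    { intros y Hy. destruct (HDcov y Hy) as [x [[n [Hxn Hn]] HDx]].
      assert (Hxl : In x l) by (apply Hl; split; [exists n; exact Hxn | exact HDx]).
      destruct (HN x Hxl) as (m & Hm & Hxm).
      rewrite Hxn in Hxm. apply INR_eq in Hxm. subst m.
      exists n. split; auto. apply in_seq. lia. }
    pose proof (finite_cover lo hi (/2) Hlh _ (seq 0 (S N)) 0 (le_n _) ltac:(lra) Hcov2) as Hfin.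
    rewrite <- fsum_seq in Hfin.
    assert (Hs : @eq R (sum_n (fun i => hi i - lo i) N) (2 * sum_n w N + 2 * eta * sum_n (fun i => (/2)^i) N)).
    { clear - N. induction N.
      - rewrite !sum_O. unfold hi, lo. ring.
      - rewrite !sum_Sn, IHN. change plus with Rplus. unfold hi, lo. ring. }
    rewrite Hs, geom_half in Hfin. specialize (HB N). specialize (Hpow N).
    unfold eta in Hfin. nra.
Qed.


Lemma psum_mono (f : nat -> R) : (forall n, 0 <= f n) -> forall N N', (N <= N')%nat -> sum_n f N <= sum_n f N'.
Proof.
  intros Hf N N' H. induction H; [lra|]. rewrite sum_Sn. change plus with Rplus. specialize (Hf (S m)). lra.
Qed.

Lemma psum_nonneg (f : nat -> R) : (forall n, 0 <= f n) -> forall N, 0 <= sum_n f N.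
Proof. intros Hf N. induction N; [rewrite sum_O; auto|]. rewrite sum_Sn. change plus with Rplus. specialize (Hf (S N)). lra. Qed.

Lemma nonneg_sum_bound (f : nat -> R) B : (forall n, 0 <= f n) -> (forall N, sum_n f N <= B) ->
  exists v, nonneg_sum f = Finite v /\ 0 <= v <= B.
Proof.
  intros Hf HB. unfold nonneg_sum.
  assert (H1 : Rbar_le (Lim_seq (fun _ => 0)) (Lim_seq (fun N => sum_n f N))).
  { apply Lim_seq_le_loc. exists 0%nat. intros; apply psum_nonneg; auto. }
  assert (H2 : Rbar_le (Lim_seq (fun N => sum_n f N)) (Lim_seq (fun _ => B))).
  { apply Lim_seq_le_loc. exists 0%nat. intros; auto. }
  rewrite Lim_seq_const in H1, H2.
  destruct (Lim_seq _) as [v| |]; simpl in H1, H2; try contradiction.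
  exists v; auto.
Qed.

Lemma nonneg_sum_partial (f : nat -> R) v : (forall n, 0 <= f n) -> nonneg_sum f = Finite v ->
  forall N, sum_n f N <= v.
Proof.
  intros Hf Hv N. unfold nonneg_sum in Hv.
  assert (Hinc : forall n, sum_n f n <= sum_n f (S n)) by (intros; apply psum_mono; auto).
  assert (Hl : is_lim_seq (fun n => sum_n f n) v).
  { rewrite <- Hv. apply Lim_seq_correct. apply ex_lim_seq_incr. exact Hinc. }
  exact (is_lim_seq_incr_compare _ _ Hl Hinc N).
Qed.

Fixpoint harm (n : nat) : R := match n with O => 0 | S k => harm k + / INR (S k) end.

Lemma harm_double n : (1 <= n)%nat -> harm n + /2 <= harm (2 * n).
Proof.
  intros Hn. induction Hn.
  - simpl. lra.
  - replace (2 * S m)%nat with (S (S (2 * m))) by lia.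
    change (harm (S (S (2*m)))) with (harm (2*m) + / INR (S (2*m)) + / INR (S (S (2*m)))).
    change (harm (S m)) with (harm m + / INR (S m)).
    assert (H1 : / INR (S (S (2 * m))) <= / INR (S (2 * m))).
    { apply Rinv_le_contravar. apply lt_0_INR; lia. apply le_INR; lia. }
    assert (H2 : / INR (S m) <= / INR (S (2 * m)) + / INR (S (S (2 * m)))).
    { rewrite !S_INR, mult_INR. replace (INR 2) with 2 by (simpl; lra).
      assert (0 <= INR m) by apply pos_INR.
      assert (/ (2 * INR m + 1 + 1) <= / (2 * INR m + 1)).
      { apply Rinv_le_contravar; lra. }
      replace (/ (INR m + 1)) with (2 * / (2 * INR m + 1 + 1)) by (field; lra).
      lra. }
    lra.
Qed.

Lemma harm_pow2 k : 1 + INR k / 2 <= harm (2 ^ k).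
Proof.
  induction k.
  - simpl. lra.
  - rewrite Nat.pow_succ_r'. pose proof (harm_double (2 ^ k)).
    assert (1 <= 2 ^ k)%nat by (apply Nat.neq_0_lt_0, Nat.pow_nonzero; lia).
    rewrite S_INR. specialize (H H0). lra.
Qed.

Lemma harm_unbounded X : exists n, X < harm n.
Proof.
  destruct (archimed (2 * X)) as [H _].
  destruct (Z_le_gt_dec 0 (up (2 * X))) as [Hz|Hz].
  - exists (2 ^ Z.to_nat (up (2 * X)))%nat. pose proof (harm_pow2 (Z.to_nat (up (2 * X)))).
    rewrite INR_IZR_INZ, Z2Nat.id in H0 by auto. lra.
  - exists 0%nat. apply Z.gt_lt in Hz. apply IZR_lt in Hz. simpl. lra.
Qed.

Lemma harm_locate c X K : 0 < c -> 0 <= X -> X < c * harm K -> exists k, c * harm k <= X <= c * harm (S k).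
Proof.
  intros Hc HX. induction K; intros HK.
  - simpl in HK. lra.
  - destruct (Rlt_le_dec X (c * harm K)) as [H|H].
    + auto.
    + exists K. lra.
Qed.

Fixpoint tsum (s : R) (n : nat) : R := match n with O => 0 | S k => tsum s k + Rpower (INR (S k)) (- s) end.

Lemma exp_mono_le x y : x <= y -> exp x <= exp y.
Proof. intros [H|H]; [left; apply exp_increasing; auto|subst; lra]. Qed.

Lemma Rpower_pos x y : 0 < Rpower x y.
Proof. unfold Rpower; apply exp_pos. Qed.

Lemma tsum_mono s n m : (n <= m)%nat -> tsum s n <= tsum s m.
Proof. intros H; induction H; [lra|]. cbn [tsum]. pose proof (Rpower_pos (INR (S m)) (-s)). lra. Qed.

Lemma tsum_bound s : 1 < s -> exists Z, 0 < Z /\ forall N, tsum s N <= Z.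
Proof.
  intros Hs. set (rho := 2 * Rpower 2 (- s)).
  assert (Hrho : rho < 1).
  { unfold rho, Rpower. rewrite <- (exp_ln 2) at 1 by lra. rewrite <- exp_plus.
    rewrite <- exp_0. apply exp_increasing. pose proof ln_lt_2. assert (0 < ln 2).
    { rewrite <- ln_1. apply ln_increasing; lra. } nra. }
  assert (Hrho0 : 0 < rho) by (unfold rho; pose proof (Rpower_pos 2 (-s)); lra).
  assert (Hstep : forall N, tsum s (S (2 * N)) <= 1 + rho * tsum s N).
  { induction N.
    -  change (tsum s (S (2*0))) with (0 + Rpower (INR 1) (-s)). change (tsum s 0) with 0. replace (INR 1) with 1 by (simpl; lra). unfold Rpower. rewrite ln_1, Rmult_0_r, exp_0. lra.
    - replace (S (2 * S N)) with (S (S (S (2 * N)))) by lia. cbn [tsum] in IHN |- *.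
      assert (Hd : Rpower (INR (S (S (2 * N)))) (- s) = Rpower 2 (-s) * Rpower (INR (S N)) (-s)).
      { rewrite Rpower_mult_distr; [|lra|apply lt_0_INR; lia]. f_equal.
        rewrite !S_INR, mult_INR. simpl. ring. }
      assert (Hd2 : Rpower (INR (S (S (S (2 * N))))) (- s) <= Rpower (INR (S (S (2 * N)))) (- s)).
      { unfold Rpower. apply exp_mono_le. 
        assert (ln (INR (S (S (2 * N)))) <= ln (INR (S (S (S (2 * N)))))).
        { apply ln_le. apply lt_0_INR; lia. apply le_INR; lia. }
        nra. }
      unfold rho in *. replace (S (2 * N)) with (S (2 * N)) by reflexivity.
      rewrite Hd in Hd2 |- *. nra. }
  exists (/ (1 - rho)). split; [apply Rinv_0_lt_compat; lra|].
  assert (Hall : forall k N, (N <= k)%nat -> tsum s N <= / (1 - rho)).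
  { induction k; intros N HN.
    - replace N with 0%nat by lia. simpl. left; apply Rinv_0_lt_compat; lra.
    - destruct N as [|N']. { simpl. left; apply Rinv_0_lt_compat; lra. }
      set (M := Nat.div2 (S N')).
      assert (HM : (S N' <= S (2 * M))%nat).
      { pose proof (Nat.div2_odd (S N')). unfold M. destruct (Nat.odd (S N')); cbn [Nat.b2n] in H; lia. }
      assert (HMk : (M <= k)%nat).
      { pose proof (Nat.div2_odd (S N')). unfold M in *. destruct (Nat.odd (S N')); cbn [Nat.b2n] in H; lia. }
      apply Rle_trans with (tsum s (S (2 * M))); [apply tsum_mono; auto|].
      apply Rle_trans with (1 + rho * tsum s M); [apply Hstep|].
      specialize (IHk M HMk).
      assert (Hz : 1 + rho * / (1 - rho) = / (1 - rho)) by (field; lra).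
      nra. }
  intros N. apply (Hall N); lia.
Qed.


Lemma sum_div2 (K : R) (s : R) M :
  @eq R (sum_n (fun n => K * Rpower (INR (S (Nat.div2 n))) (- s)) (S (2 * M))) (2 * K * tsum s (S M)).
Proof.
  induction M.
  - rewrite sum_Sn, sum_O. change plus with Rplus. cbn [tsum]. simpl Nat.div2. 
    change (tsum s 0) with 0. ring.
  - replace (S (2 * S M)) with (S (S (S (2 * M)))) by lia.
    rewrite !sum_Sn. change plus with Rplus. rewrite sum_Sn in IHM. change plus with Rplus in IHM.
    rewrite IHM.
    replace (Nat.div2 (S (S (2 * M)))) with (S M).
    2:{ replace (S (S (2 * M))) with (2 * S M)%nat by lia. now rewrite Nat.div2_double. }
    replace (Nat.div2 (S (S (S (2 * M))))) with (S M).
    2:{ replace (S (S (S (2 * M)))) with (S (2 * S M))%nat by lia. now rewrite Nat.div2_succ_double. }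
    change (tsum s (S (S M))) with (tsum s (S M) + Rpower (INR (S (S M))) (- s)). ring.
Qed.

Lemma odd_double k : Nat.odd (2 * k) = false.
Proof. pose proof (Nat.div2_odd (2 * k)). rewrite Nat.div2_double in H. destruct (Nat.odd (2*k)); cbn [Nat.b2n] in H; auto; lia. Qed.
Lemma odd_succ_double k : Nat.odd (S (2 * k)) = true.
Proof. pose proof (Nat.div2_odd (S (2 * k))). rewrite Nat.div2_succ_double in H. destruct (Nat.odd (S (2*k))); cbn [Nat.b2n] in H; auto; lia. Qed.

Theorem measure_zero_gt1 (s : R) (E : R -> Prop) : 1 < s -> hausdorff_measure s E = Finite 0.
Proof.
  intros Hs. destruct (tsum_bound s Hs) as (Z & HZ & HT).
  assert (Hcontent : forall delta, 0 < delta -> hausdorff_content s delta E = Finite 0).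
  { intros delta Hdelta. unfold hausdorff_content. apply is_glb_Rbar_unique. split.
    - intros v (U & _ & Hv). simpl.
      assert (H1 : Rbar_le (Lim_seq (fun _ => 0)) (nonneg_sum (fun n => diam_pow (U n) s))).
      { apply Lim_seq_le_loc. exists 0%nat. intros; apply psum_nonneg. intros; apply diam_pow_nonneg. }
      rewrite Lim_seq_const, <- Hv in H1. exact H1.
    - intros b Hb.
      assert (Hsmall : forall eta, 0 < eta -> Rbar_le b (Finite eta)).
      { intros eta Heta.
        set (c0 := Rmin delta (eta / (2 * Z))).
        assert (Hc0 : 0 < c0) by (apply Rmin_pos; auto; apply Rdiv_lt_0_compat; lra).
        set (c := Rmin c0 1).
        assert (Hc : 0 < c) by (apply Rmin_pos; lra).
        assert (Hc1 : c <= 1) by apply Rmin_r.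
        assert (Hcd : c <= delta) by (eapply Rle_trans; [apply Rmin_l|apply Rmin_l]).
        assert (Hce : c <= eta / (2 * Z)) by (eapply Rle_trans; [apply Rmin_l|apply Rmin_r]).
        assert (Hcs : Rpower c s <= c).
        { unfold Rpower. rewrite <- (exp_ln c) at 2 by auto. apply exp_mono_le.
          assert (ln c <= 0) by (rewrite <- ln_1; apply ln_le; lra). nra. }
        set (h := fun n => c / INR (S (Nat.div2 n))).
        set (u := fun n => if Nat.odd n then - (c * harm (Nat.div2 n)) - h n else c * harm (Nat.div2 n)).
        set (U := fun n x => u n <= x <= u n + h n).
        assert (Hh : forall n, 0 < h n).
        { intros n. unfold h. apply Rdiv_lt_0_compat; auto. apply lt_0_INR, Nat.lt_0_succ. }
        assert (Hhc : forall n, h n <= c).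
        { intros n. unfold h. unfold Rdiv. rewrite <- (Rmult_1_r c) at 2.
          apply Rmult_le_compat_l; [lra|]. rewrite <- Rinv_1. apply Rinv_le_contravar; [lra|].
          apply (le_INR 1), le_n_S, Nat.le_0_l. }
        assert (Hdiam : forall n, diam (U n) = Finite (h n)).
        { intros n. apply diam_interval. left; auto. }
        assert (Hdp : forall n, diam_pow (U n) s = Rpower c s * Rpower (INR (S (Nat.div2 n))) (- s)).
        { intros n. unfold diam_pow. rewrite Hdiam. destruct (Req_EM_T (h n) 0) as [e|_].
          { specialize (Hh n). lra. }
          unfold h, Rdiv. rewrite <- Rpower_mult_distr; auto.
          2:{ apply Rinv_0_lt_compat, lt_0_INR, Nat.lt_0_succ. }
          f_equal. unfold Rpower. rewrite ln_Rinv.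
          2: apply lt_0_INR, Nat.lt_0_succ.
          f_equal. ring. }
        destruct (nonneg_sum_bound (fun n => diam_pow (U n) s) (2 * Rpower c s * Z)) as (v & Hv & Hv0 & HvB).
        { intros; apply diam_pow_nonneg. }
        { intros N. apply Rle_trans with (sum_n (fun n => diam_pow (U n) s) (S (2 * N))).
          - apply psum_mono; [intros; apply diam_pow_nonneg|lia].
          - rewrite (sum_n_ext _ (fun n => Rpower c s * Rpower (INR (S (Nat.div2 n))) (- s))) by apply Hdp.
            rewrite sum_div2. specialize (HT (S N)). pose proof (Rpower_pos c s). nra. }
        apply Rbar_le_trans with (Finite v).
        + apply Hb. exists U. split; [split|auto].
          * intros n. rewrite Hdiam. simpl. specialize (Hhc n). lra.
          * intros x _. destruct (Rle_lt_dec 0 x) as [Hx|Hx].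
            -- destruct (harm_unbounded (x / c)) as [K HK].
               destruct (harm_locate c x K Hc Hx) as [k Hk].
               { apply (Rmult_lt_compat_l c) in HK; auto. unfold Rdiv in HK.
                 rewrite <- Rmult_assoc, (Rmult_comm c x), Rmult_assoc, Rinv_r, Rmult_1_r in HK; lra. }
               exists (2 * k)%nat. unfold U, u, h. rewrite odd_double, Nat.div2_double.
               cbn [harm] in Hk. unfold Rdiv. lra.
            -- destruct (harm_unbounded (- x / c)) as [K HK].
               destruct (harm_locate c (- x) K Hc) as [k Hk]; [lra| |].
               { apply (Rmult_lt_compat_l c) in HK; auto. unfold Rdiv in HK.
                 rewrite <- Rmult_assoc, (Rmult_comm c (-x)), Rmult_assoc, Rinv_r, Rmult_1_r in HK; lra. }
               exists (S (2 * k))%nat. unfold U, u, h. rewrite odd_succ_double, Nat.div2_succ_double.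
               cbn [harm] in Hk. unfold Rdiv in *. lra.
        + simpl.
          assert (2 * Rpower c s * Z <= eta).
          { apply Rle_trans with (2 * c * Z); [nra|].
            apply (Rmult_le_compat_l (2 * Z)) in Hce; [|lra].
            replace (2 * Z * (eta / (2 * Z))) with eta in Hce by (field; lra). lra. }
          lra. }
      destruct b as [b| |]; simpl; auto.
      + destruct (Rle_lt_dec b 0) as [|Hb0]; auto.
        specialize (Hsmall (b / 2) ltac:(lra)). simpl in Hsmall. lra.
      + specialize (Hsmall 1 ltac:(lra)). simpl in Hsmall. auto. }
  unfold hausdorff_measure. apply is_lub_Rbar_unique. split.
  - intros v (delta & Hd & Hv). rewrite Hcontent in Hv by auto. exact Hv.
  - intros b Hb. apply Hb. exists 1. split; [lra|]. rewrite Hcontent by lra. simpl; lra.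
Qed.


Definition child (xi eps : R) (a : nat -> R) (m : nat) (l : R) (i : nat) : R * R :=
  let K0 := up (xi * l ^ m) in
  (root m ((IZR K0 + INR i + a m) / xi), root m ((IZR K0 + INR i + a m + eps) / xi)).

Definition Inv (xi eps : R) (a : nat -> R) (A : R) (n : nat) (p : R * R) : Prop :=
  A <= fst p /\ fst p < snd p /\ snd p <= 2 * A /\
  exists K : Z, xi * (fst p) ^ n = IZR K + a n /\ xi * (snd p) ^ n = IZR K + a n + eps.

Lemma child_props (xi eps : R) (a : nat -> R) (A : R) (M n : nat) (l r : R) :
  0 < xi -> 0 < eps < 1 -> (forall k, (1 <= k)%nat -> 0 <= a k < 1 - eps) ->
  1 <= A -> 1 <= xi * A -> INR M + 1 <= A * eps -> (1 <= n)%nat ->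
  Inv xi eps a A n (l, r) ->
  (forall i, (i < M)%nat ->
     Inv xi eps a A (S n) (child xi eps a (S n) l i) /\
     l <= fst (child xi eps a (S n) l i) /\ snd (child xi eps a (S n) l i) <= r /\
     r - l <= 8 * A * (snd (child xi eps a (S n) l i) - fst (child xi eps a (S n) l i))) /\
  (forall i i' x y, (i < i')%nat -> (i' < M)%nat ->
     fst (child xi eps a (S n) l i) <= x <= snd (child xi eps a (S n) l i) ->
     fst (child xi eps a (S n) l i') <= y <= snd (child xi eps a (S n) l i') ->
     (1 - eps) * (r - l) <= 8 * A * (y - x)).
Proof.
  intros Hxi Heps Ha HA1 HxiA HM Hn [HlA [Hlr [Hr2A [K [HKl HKr]]]]].
  simpl in HlA, Hlr, Hr2A, HKl, HKr.
  set (P := IZR K + a n) in *.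
  assert (HP1 : 1 <= P).
  { rewrite <- HKl. destruct n as [|n0]; [lia|]. simpl.
    assert (1 <= l ^ n0) by (apply pow_R1_Rle; lra).
    assert (l <= l * l ^ n0) by nra. nra. }
  destruct n as [|n0]; [lia|].
  destruct (pow_mvt n0 l r) as [Hpl _]; [lra|].
  assert (Hpar : INR (S n0) * P * (r - l) <= eps * l).
  { assert (Hlp : xi * l ^ n0 * l = P) by (rewrite <- HKl; simpl; ring).
    assert (Heps_eq : eps = xi * (r ^ S n0 - l ^ S n0)) by lra.
    assert (HlS : 0 <= l) by lra.
    assert (H1 : xi * (INR (S n0) * l ^ n0 * (r - l)) <= eps).
    { rewrite Heps_eq. apply Rmult_le_compat_l; lra. }
    apply (Rmult_le_compat_r l) in H1; [|lra].
    replace (INR (S n0) * P * (r - l)) with (xi * (INR (S n0) * l ^ n0 * (r - l)) * l)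
      by (rewrite <- Hlp; ring). exact H1. }
  set (m := S (S n0)).
  set (psi := fun x => xi * x ^ m).
  assert (Hpsil : psi l = l * P) by (unfold psi, m; rewrite <- HKl; simpl; ring).
  assert (Hpsir : psi r = r * (P + eps)) by (unfold psi, m; rewrite <- HKr; simpl; ring).
  set (K0 := up (xi * l ^ m)).
  destruct (archimed (xi * l ^ m)) as [HK0a HK0b]. fold K0 in HK0a, HK0b.
  change (xi * l ^ m) with (psi l) in HK0a, HK0b.
  assert (Hrng : psi r - psi l >= A * eps).
  { rewrite Hpsil, Hpsir. nra. }
  assert (Ham : 0 <= a m < 1 - eps) by (apply Ha; unfold m; lia).
  assert (HINRn : 1 <= INR (S n0)) by (apply (le_INR 1); lia).
  assert (Hm2 : INR m <= 2 * INR (S n0)) by (unfold m; rewrite S_INR; lra).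
  assert (Hch : forall i, (i < M)%nat ->
     let y1 := IZR K0 + INR i + a m in
     psi l < y1 /\ y1 + eps < psi r /\
     psi (fst (child xi eps a m l i)) = y1 /\
     psi (snd (child xi eps a m l i)) = y1 + eps /\
     0 < fst (child xi eps a m l i) /\ 0 < snd (child xi eps a m l i)).
  { intros i Hi y1.
    assert (HiM : INR i + 1 <= INR M) by (rewrite <- S_INR; apply le_INR; lia).
    assert (Hi0 : 0 <= INR i) by apply pos_INR.
    assert (Hy1 : psi l < y1) by (unfold y1; lra).
    assert (Hpl0 : 0 < psi l) by (rewrite Hpsil; nra).
    destruct (root_spec m (y1 / xi)) as [R1 R2]; [unfold m; lia|apply Rdiv_lt_0_compat; lra|].
    destruct (root_spec m ((y1 + eps) / xi)) as [R3 R4]; [unfold m; lia|apply Rdiv_lt_0_compat; lra|].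
    unfold child. cbn [fst snd]. change (up (xi * l ^ m)) with K0. unfold y1 in *.
    repeat split; try lra.
    - unfold psi. rewrite R2. field. lra.
    - unfold psi. replace (IZR K0 + INR i + a m + eps) with (IZR K0 + INR i + a m + eps) by ring.
      rewrite R4. field. lra. }
  split.
  - intros i Hi. destruct (Hch i Hi) as (H1 & H2 & H3 & H4 & H5 & H6).
    set (l' := fst (child xi eps a m l i)) in *.
    set (r' := snd (child xi eps a m l i)) in *.
    assert (Hll' : l < l').
    { apply (pow_lt_inv m); [unfold m; lia|lra|lra|]. unfold psi in H3, H1.
      apply (Rmult_lt_reg_l xi); lra. }
    assert (Hr'r : r' < r).
    { apply (pow_lt_inv m); [unfold m; lia|lra|lra|]. unfold psi in H4, H2.
      apply (Rmult_lt_reg_l xi); lra. }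
    assert (Hl'r' : l' < r').
    { apply (pow_lt_inv m); [unfold m; lia|lra|lra|]. unfold psi in H3, H4.
      apply (Rmult_lt_reg_l xi); lra. }
    destruct (pow_mvt (S n0) l' r') as [_ Hu]; [lra|].
    assert (Hrn : r' ^ S n0 <= r ^ S n0) by (apply pow_le_mono; lra).
    assert (HxirP : xi * r ^ S n0 = P + eps) by exact HKr.
    assert (Hlen : eps <= INR m * (P + eps) * (r' - l')).
    { assert (eps = xi * (r' ^ m - l' ^ m)) by (unfold psi in H3, H4; lra).
      apply Rle_trans with (xi * (INR m * r' ^ S n0 * (r' - l'))).
      - rewrite H at 1. apply Rmult_le_compat_l; [lra|]. exact Hu.
      - rewrite <- HxirP. assert (0 <= INR m) by apply pos_INR.
        assert (0 <= r' ^ S n0) by (apply pow_le; lra).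
        assert (INR m * r' ^ S n0 <= INR m * r ^ S n0) by (apply Rmult_le_compat_l; lra).
        replace (xi * (INR m * r' ^ S n0 * (r' - l'))) with ((xi * (r' - l')) * (INR m * r' ^ S n0)) by ring.
        replace (INR m * (xi * r ^ S n0) * (r' - l')) with ((xi * (r' - l')) * (INR m * r ^ S n0)) by ring.
        apply Rmult_le_compat_l; [apply Rmult_le_pos; lra | assumption]. }
    split; [|split; [lra|split; [lra|]]].
    + unfold Inv. fold l' r'. repeat split; try lra.
      exists (K0 + Z.of_nat i)%Z. rewrite plus_IZR, <- INR_IZR_INZ. fold m.
      unfold psi in H3, H4. split; lra.
    +
      assert (HnP : 0 < INR (S n0) * P) by (apply Rmult_lt_0_compat; lra).
      assert (Hc : INR (S n0) * P * (r - l) <= INR (S n0) * P * (8 * A * (r' - l'))).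
      { apply Rle_trans with (eps * l); auto.
        apply Rle_trans with (eps * (2 * A)); [apply Rmult_le_compat_l; lra|].
        apply Rle_trans with (INR m * (P + eps) * (r' - l') * (2 * A)); [apply Rmult_le_compat_r; lra|].
        assert (INR m * (P + eps) <= 4 * (INR (S n0) * P)).
      { apply Rle_trans with ((2 * INR (S n0)) * (2 * P)); [apply Rmult_le_compat; try lra; apply pos_INR|lra]. }
        assert (0 <= r' - l') by lra.
        replace (INR m * (P + eps) * (r' - l') * (2 * A)) with ((INR m * (P + eps)) * ((r' - l') * (2 * A))) by ring.
        replace (INR (S n0) * P * (8 * A * (r' - l'))) with ((4 * (INR (S n0) * P)) * ((r' - l') * (2 * A))) by ring.
        apply Rmult_le_compat_r; [apply Rmult_le_pos; lra|assumption]. }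
      apply Rmult_le_reg_l in Hc; auto.
  - intros i i' x y Hii' Hi' Hx Hy.
    assert (Hi : (i < M)%nat) by lia.
    destruct (Hch i Hi) as (H1 & H2 & H3 & H4 & H5 & H6).
    destruct (Hch i' Hi') as (H1' & H2' & H3' & H4' & H5' & H6').
    set (l1 := fst (child xi eps a m l i)) in *.
    set (r1 := snd (child xi eps a m l i)) in *.
    set (l2 := fst (child xi eps a m l i')) in *.
    set (r2 := snd (child xi eps a m l i')) in *.
    assert (Hii : INR i + 1 <= INR i') by (rewrite <- S_INR; apply le_INR; lia).
    assert (Hpx : psi x <= psi r1).
    { unfold psi. apply Rmult_le_compat_l; [lra|]. apply pow_le_mono; lra. }
    assert (Hpy : psi l2 <= psi y).
    { unfold psi. apply Rmult_le_compat_l; [lra|]. apply pow_le_mono; lra. }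
    assert (Hgap : 1 - eps <= psi y - psi x) by lra.
    assert (Hxy : x < y).
    { apply (pow_lt_inv m); [unfold m; lia|lra|lra|]. unfold psi in Hgap.
      apply (Rmult_lt_reg_l xi); lra. }
    assert (Hyr : y <= r).
    { assert (r2 < r).
      { apply (pow_lt_inv m); [unfold m; lia|lra|lra|]. unfold psi in H4', H2'.
        apply (Rmult_lt_reg_l xi); lra. }
      lra. }
    destruct (pow_mvt (S n0) x y) as [_ Hu]; [lra|].
    assert (Hyn : y ^ S n0 <= r ^ S n0) by (apply pow_le_mono; lra).
    assert (Hlen : 1 - eps <= INR m * (P + eps) * (y - x)).
    { rewrite <- HKr. apply Rle_trans with (psi y - psi x); auto.
      unfold psi. fold m in Hu.
      apply Rle_trans with (xi * (INR m * y ^ S n0 * (y - x))).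
      - replace (xi * y ^ m - xi * x ^ m) with (xi * (y ^ m - x ^ m)) by ring.
        apply Rmult_le_compat_l; lra.
      - assert (0 <= INR m) by apply pos_INR.
        assert (0 <= y ^ S n0) by (apply pow_le; lra).
        assert (INR m * y ^ S n0 <= INR m * r ^ S n0) by (apply Rmult_le_compat_l; lra).
        replace (xi * (INR m * y ^ S n0 * (y - x))) with ((xi * (y - x)) * (INR m * y ^ S n0)) by ring.
        replace (INR m * (xi * r ^ S n0) * (y - x)) with ((xi * (y - x)) * (INR m * r ^ S n0)) by ring.
        apply Rmult_le_compat_l; [apply Rmult_le_pos; lra | assumption]. }
    assert (HnP : 0 < INR (S n0) * P) by (apply Rmult_lt_0_compat; lra).
    assert (Hc : INR (S n0) * P * ((1 - eps) * (r - l)) <= INR (S n0) * P * (8 * A * (y - x))).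
    { replace (INR (S n0) * P * ((1 - eps) * (r - l))) with ((1 - eps) * (INR (S n0) * P * (r - l))) by ring.
      apply Rle_trans with ((1 - eps) * (eps * l)); [apply Rmult_le_compat_l; lra|].
      apply Rle_trans with (2 * A * (1 - eps)).
      { rewrite (Rmult_comm (2 * A)). apply Rmult_le_compat_l; [lra|]. apply Rle_trans with (1 * (2 * A)); [apply Rmult_le_compat; lra|lra]. }
      apply Rle_trans with (2 * A * (INR m * (P + eps) * (y - x))); [apply Rmult_le_compat_l; lra|].
      assert (INR m * (P + eps) <= 4 * (INR (S n0) * P)).
      { apply Rle_trans with ((2 * INR (S n0)) * (2 * P)); [apply Rmult_le_compat; try lra; apply pos_INR|lra]. }
      assert (0 <= y - x) by lra.
      replace (2 * A * (INR m * (P + eps) * (y - x))) with ((INR m * (P + eps)) * ((y - x) * (2 * A))) by ring.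
      replace (INR (S n0) * P * (8 * A * (y - x))) with ((4 * (INR (S n0) * P)) * ((y - x) * (2 * A))) by ring.
      apply Rmult_le_compat_r; [apply Rmult_le_pos; lra|assumption]. }
    apply Rmult_le_reg_l in Hc; auto.
Qed.


Definition Aof (eps : R) (M : nat) : R := (INR M + 1) / eps.

Fixpoint node (xi eps : R) (a : nat -> R) (M : nat) (j : nat) (q : Z) : R * R :=
  match j with
  | O => let K := up (xi * Aof eps M) in ((IZR K + a 1%nat) / xi, (IZR K + a 1%nat + eps) / xi)
  | S j' => child xi eps a (S (S j')) (fst (node xi eps a M j' (q / Z.of_nat M)))
              (Z.to_nat (q mod Z.of_nat M))
  end.

Definition Hyp (xi eps : R) (a : nat -> R) (M : nat) : Prop :=
  0 < xi /\ 0 < eps < 1 /\ (forall k, (1 <= k)%nat -> 0 <= a k < 1 - eps) /\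
  (2 <= M)%nat /\ 2 <= xi * Aof eps M.

Lemma Hyp_facts xi eps a M : Hyp xi eps a M ->
  1 <= Aof eps M /\ 1 <= xi * Aof eps M /\ INR M + 1 <= Aof eps M * eps /\ 0 < INR M.
Proof.
  intros (Hxi & Heps & Ha & HM & HxA).
  assert (HM2 : 2 <= INR M) by (apply (le_INR 2) in HM; simpl in HM; lra).
  assert (HA : Aof eps M * eps = INR M + 1) by (unfold Aof; field; lra).
  assert (HA1 : 1 <= Aof eps M).
  { destruct (Rlt_le_dec (Aof eps M) 1); auto. assert (Aof eps M * eps < 1 * 1) by (apply Rmult_le_0_lt_compat; try lra; unfold Aof; apply Rmult_le_pos; [lra|left; apply Rinv_0_lt_compat; lra]). lra. }
  repeat split; lra.
Qed.

Lemma node_props xi eps a M : Hyp xi eps a M -> forall j q,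
  Inv xi eps a (Aof eps M) (S j) (node xi eps a M j q) /\
  eps / xi <= (8 * Aof eps M) ^ j * (snd (node xi eps a M j q) - fst (node xi eps a M j q)).
Proof.
  intros HH. pose proof (Hyp_facts _ _ _ _ HH) as (HA1 & HxA1 & HMA & HM0).
  destruct HH as (Hxi & Heps & Ha & HM & HxA).
  set (A := Aof eps M) in *.
  induction j as [|j IH]; intros q.
  - cbn [node]. fold A. set (K := up (xi * A)). destruct (archimed (xi * A)) as [HK1 HK2]. fold K in HK1, HK2.
    pose proof (Ha 1%nat (le_n 1)) as Ha1.
    split.
    + unfold Inv. cbn [fst snd]. repeat split.
      * apply (Rmult_le_reg_l xi); auto. replace (xi * ((IZR K + a 1%nat) / xi)) with (IZR K + a 1%nat) by (field; lra). lra.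
      * unfold Rdiv. apply Rmult_lt_compat_r; [apply Rinv_0_lt_compat; lra|lra].
      * apply (Rmult_le_reg_l xi); auto. replace (xi * ((IZR K + a 1%nat + eps) / xi)) with (IZR K + a 1%nat + eps) by (field; lra). lra.
      * exists K. split; simpl; field; lra.
    + cbn [fst snd]. simpl pow. replace ((IZR K + a 1%nat + eps) / xi - (IZR K + a 1%nat) / xi) with (eps / xi) by (field; lra). lra.
  - cbn [node]. set (q' := (q / Z.of_nat M)%Z). set (i := Z.to_nat (q mod Z.of_nat M)).
    destruct (IH q') as [Hinv Hlen].
    destruct (node xi eps a M j q') as [l r] eqn:Hn. cbn [fst snd] in *.
    assert (Hi : (i < M)%nat).
    { unfold i. assert (0 < Z.of_nat M)%Z by lia. pose proof (Z.mod_pos_bound q (Z.of_nat M) H). lia. }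
    destruct (child_props xi eps a A M (S j) l r Hxi Heps Ha HA1 HxA1 HMA ltac:(lia) Hinv) as [Hc _].
    destruct (Hc i Hi) as (Hinv' & Hl & Hr & Hlen').
    split; auto.
    rewrite <- tech_pow_Rmult.
    assert (0 <= (8 * A) ^ j) by (apply pow_le; lra).
    apply Rle_trans with ((8 * A) ^ j * (r - l)); auto.
    rewrite (Rmult_comm (8 * A)), Rmult_assoc. apply Rmult_le_compat_l; auto.
Qed.

Lemma node_nest xi eps a M : Hyp xi eps a M -> forall j q,
  fst (node xi eps a M j (q / Z.of_nat M)) <= fst (node xi eps a M (S j) q) /\
  snd (node xi eps a M (S j) q) <= snd (node xi eps a M j (q / Z.of_nat M)).
Proof.
  intros HH j q. pose proof (Hyp_facts _ _ _ _ HH) as (HA1 & HxA1 & HMA & HM0).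
  pose proof (node_props _ _ _ _ HH j (q / Z.of_nat M)%Z) as [Hinv _].
  destruct HH as (Hxi & Heps & Ha & HM & HxA).
  cbn [node]. destruct (node xi eps a M j (q / Z.of_nat M)) as [l r]. cbn [fst snd] in *.
  set (i := Z.to_nat (q mod Z.of_nat M)).
  assert (Hi : (i < M)%nat).
  { unfold i. assert (0 < Z.of_nat M)%Z by lia. pose proof (Z.mod_pos_bound q (Z.of_nat M) H). lia. }
  destruct (child_props xi eps a (Aof eps M) M (S j) l r Hxi Heps Ha HA1 HxA1 HMA ltac:(lia) Hinv) as [Hc _].
  destruct (Hc i Hi) as (_ & Hl & Hr & _). auto.
Qed.

Lemma node_sep xi eps a M : Hyp xi eps a M -> forall j q q1 q2 x y,
  (q1 / Z.of_nat M)%Z = q -> (q2 / Z.of_nat M)%Z = q -> q1 <> q2 ->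
  fst (node xi eps a M (S j) q1) <= x <= snd (node xi eps a M (S j) q1) ->
  fst (node xi eps a M (S j) q2) <= y <= snd (node xi eps a M (S j) q2) ->
  (1 - eps) * (snd (node xi eps a M j q) - fst (node xi eps a M j q)) <= 8 * Aof eps M * Rabs (x - y).
Proof.
  intros HH j q q1 q2 x y H1 H2 Hne Hx Hy. pose proof (Hyp_facts _ _ _ _ HH) as (HA1 & HxA1 & HMA & HM0).
  pose proof (node_props _ _ _ _ HH j q) as [Hinv _].
  destruct HH as (Hxi & Heps & Ha & HM & HxA).
  cbn [node] in Hx, Hy. rewrite H1 in Hx. rewrite H2 in Hy.
  destruct (node xi eps a M j q) as [l r]. cbn [fst snd] in *.
  set (i1 := Z.to_nat (q1 mod Z.of_nat M)) in *.
  set (i2 := Z.to_nat (q2 mod Z.of_nat M)) in *.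
  assert (HMz : (0 < Z.of_nat M)%Z) by lia.
  pose proof (Z.mod_pos_bound q1 (Z.of_nat M) HMz). pose proof (Z.mod_pos_bound q2 (Z.of_nat M) HMz).
  assert (Hi1 : (i1 < M)%nat) by (unfold i1; lia).
  assert (Hi2 : (i2 < M)%nat) by (unfold i2; lia).
  assert (Hneq : i1 <> i2).
  { intros Heq. apply Hne. unfold i1, i2 in Heq. apply Z2Nat.inj in Heq; try lia.
    rewrite (Z.div_mod q1 (Z.of_nat M)), (Z.div_mod q2 (Z.of_nat M)) by lia. rewrite H1, H2, Heq. reflexivity. }
  destruct (child_props xi eps a (Aof eps M) M (S j) l r Hxi Heps Ha HA1 HxA1 HMA ltac:(lia) Hinv) as [_ Hs].
  assert (HA0 : 0 < 8 * Aof eps M) by lra.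
  destruct (Nat.lt_gt_cases i1 i2) as [[Hlt|Hlt] _]; [exact Hneq| |].
  - pose proof (Hs i1 i2 x y Hlt Hi2 Hx Hy).
    apply Rle_trans with (8 * Aof eps M * (y - x)); auto.
    apply Rmult_le_compat_l; [lra|]. rewrite Rabs_minus_sym. apply Rle_abs.
  - pose proof (Hs i2 i1 y x Hlt Hi1 Hy Hx).
    apply Rle_trans with (8 * Aof eps M * (x - y)); auto.
    apply Rmult_le_compat_l; [lra|]. apply Rle_abs.
Qed.


Definition F (M : nat) (t : R) (j : nat) : Z := Int_part (INR M ^ j * t).
Definition path xi eps a M t j := node xi eps a M j (F M t j).
Definition gmap xi eps a M t := real (Lub_Rbar (fun x => exists j, x = fst (path xi eps a M t j))).

Lemma floor_char z x : IZR z <= x < IZR z + 1 -> Int_part x = z.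
Proof.
  intros H. unfold Int_part. rewrite <- (tech_up x (z + 1)); [ring| |]; rewrite plus_IZR; lra.
Qed.

Lemma floor_bounds x : IZR (Int_part x) <= x < IZR (Int_part x) + 1.
Proof. pose proof (base_Int_part x). lra. Qed.

Lemma F_div M t j : (1 <= M)%nat -> (F M t (S j) / Z.of_nat M)%Z = F M t j.
Proof.
  intros HM. set (f := F M t j). set (f' := F M t (S j)).
  assert (HMr : 0 < INR M) by (apply lt_0_INR; lia).
  pose proof (floor_bounds (INR M ^ j * t)) as Hf. fold (F M t j) f in Hf.
  pose proof (floor_bounds (INR M ^ S j * t)) as Hf'. fold (F M t (S j)) f' in Hf'.
  replace (INR M ^ S j * t) with (INR M * (INR M ^ j * t)) in Hf' by (simpl; ring).
  assert (H1 : IZR (Z.of_nat M * f) <= INR M * (INR M ^ j * t) < IZR (Z.of_nat M * f) + INR M).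
  { rewrite mult_IZR, <- INR_IZR_INZ. split; [apply Rmult_le_compat_l; lra|].
    replace (INR M * IZR f + INR M) with (INR M * (IZR f + 1)) by ring.
    apply Rmult_lt_compat_l; lra. }
  assert (H2 : (Z.of_nat M * f <= f')%Z).
  { assert (IZR (Z.of_nat M * f) < IZR (f' + 1)) by (rewrite plus_IZR; lra).
    apply lt_IZR in H. lia. }
  assert (H3 : (f' < Z.of_nat M * f + Z.of_nat M)%Z).
  { assert (IZR f' < IZR (Z.of_nat M * f + Z.of_nat M)) by (rewrite plus_IZR, <- INR_IZR_INZ; lra).
    apply lt_IZR in H. lia. }
  symmetry. apply (Z.div_unique_pos _ _ _ (f' - Z.of_nat M * f)); lia.
Qed.

Lemma F0 M t : 0 <= t < 1 -> F M t 0 = 0%Z.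
Proof. intros H. unfold F. apply floor_char. simpl. lra. Qed.

Lemma path_nest xi eps a M t j : Hyp xi eps a M ->
  fst (path xi eps a M t j) <= fst (path xi eps a M t (S j)) /\
  snd (path xi eps a M t (S j)) <= snd (path xi eps a M t j).
Proof.
  intros HH. unfold path. pose proof (node_nest _ _ _ _ HH j (F M t (S j))).
  destruct HH as (_ & _ & _ & HM & _). rewrite F_div in H by lia. exact H.
Qed.

Lemma nested_lub (l r : nat -> R) : (forall j, l j <= l (S j)) -> (forall j, r (S j) <= r j) ->
  (forall j, l j <= r j) ->
  forall j, l j <= real (Lub_Rbar (fun x => exists k, x = l k)) <= r j.
Proof.
  intros Hl Hr Hlr.
  assert (Hlm : forall j k, (j <= k)%nat -> l j <= l k).
  { intros j k H; induction H; [lra|]. specialize (Hl m). lra. }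
  assert (Hrm : forall j k, (j <= k)%nat -> r k <= r j).
  { intros j k H; induction H; [lra|]. specialize (Hr m). lra. }
  assert (Hall : forall k j, l k <= r j).
  { intros k j. destruct (Nat.le_ge_cases k j).
    - specialize (Hlm k j H). specialize (Hlr j). lra.
    - specialize (Hrm j k H). specialize (Hlr k). lra. }
  destruct (Lub_Rbar_correct (fun x => exists k, x = l k)) as [Hub Hleast].
  assert (Hle : forall j, Rbar_le (Lub_Rbar (fun x => exists k, x = l k)) (Finite (r j))).
  { intros j. apply Hleast. intros x [k ->]. simpl. apply Hall. }
  assert (Hge : forall j, Rbar_le (Finite (l j)) (Lub_Rbar (fun x => exists k, x = l k))).
  { intros j. apply Hub. eauto. }
  intros j. specialize (Hle j). specialize (Hge j).
  destruct (Lub_Rbar _); simpl in *; try contradiction. auto.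
Qed.

Lemma gmap_bounds xi eps a M t : Hyp xi eps a M -> forall j,
  fst (path xi eps a M t j) <= gmap xi eps a M t <= snd (path xi eps a M t j).
Proof.
  intros HH. unfold gmap. apply nested_lub.
  - intros j. apply (path_nest _ _ _ _ t j HH).
  - intros j. apply (path_nest _ _ _ _ t j HH).
  - intros j. destruct (node_props _ _ _ _ HH j (F M t j)) as [[_ [H _]] _]. unfold path. lra.
Qed.

Lemma gmap_in_E xi eps a M t : Hyp xi eps a M -> forall n, (1 <= n)%nat ->
  a n <= frac_part (xi * (gmap xi eps a M t) ^ n) <= a n + eps.
Proof.
  intros HH n Hn. pose proof (Hyp_facts _ _ _ _ HH) as (HA1 & _ & _ & _).
  destruct n as [|j]; [lia|].
  pose proof (gmap_bounds _ _ _ _ t HH j) as Hg.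
  destruct (node_props _ _ _ _ HH j (F M t j)) as [[HlA [_ [_ [K [HK1 HK2]]]]] _].
  unfold path in Hg. set (l := fst (node xi eps a M j (F M t j))) in *.
  set (r := snd (node xi eps a M j (F M t j))) in *.
  set (gt := gmap xi eps a M t) in *.
  destruct HH as (Hxi & Heps & Ha & _ & _).
  assert (H1 : xi * l ^ S j <= xi * gt ^ S j) by (apply Rmult_le_compat_l; [lra|apply pow_le_mono; lra]).
  assert (H2 : xi * gt ^ S j <= xi * r ^ S j) by (apply Rmult_le_compat_l; [lra|apply pow_le_mono; lra]).
  specialize (Ha (S j) Hn).
  replace (xi * gt ^ S j) with (IZR K + (xi * gt ^ S j - IZR K)) by ring.
  rewrite frac_int_plus by lra. lra.
Qed.


Lemma first_split (f g : nat -> Z) : f 0%nat = g 0%nat -> forall J, f J <> g J ->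
  exists j, f j = g j /\ f (S j) <> g (S j).
Proof.
  intros H0 J. induction J as [|J IH]; intros HJ; [contradiction|].
  destruct (Z.eq_dec (f J) (g J)) as [e|n]; [exists J; auto|]. apply IH; auto.
Qed.

Lemma pow_ge_nat x J : 2 <= x -> INR J <= x ^ J.
Proof.
  intros Hx. induction J as [|J IH]; [simpl; lra|].
  rewrite S_INR. simpl. assert (1 <= x ^ J) by (apply pow_R1_Rle; lra). nra.
Qed.

Lemma gmap_sep xi eps a M t t' : Hyp xi eps a M -> 0 <= t < 1 -> 0 <= t' < 1 -> t <> t' ->
  exists j, Rabs (t - t') < / INR M ^ j /\
    (1 - eps) * (eps / xi) / (8 * Aof eps M) * / (8 * Aof eps M) ^ j <=
      Rabs (gmap xi eps a M t - gmap xi eps a M t').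
Proof.
  intros HH Ht Ht' Hne. pose proof (Hyp_facts _ _ _ _ HH) as (HA1 & _ & _ & HM0).
  pose proof HH as (Hxi & Heps & Ha & HM & HxA).
  assert (HM2 : 2 <= INR M) by (apply (le_INR 2) in HM; simpl in HM; lra).
  assert (Hd : 0 < Rabs (t - t')) by (apply Rabs_pos_lt; lra).
  assert (Hclose : forall j, F M t j = F M t' j -> Rabs (t - t') < / INR M ^ j).
  { intros j Hj. pose proof (floor_bounds (INR M ^ j * t)) as B1. pose proof (floor_bounds (INR M ^ j * t')) as B2.
    unfold F in Hj. rewrite Hj in B1.
    assert (HMj : 0 < INR M ^ j) by (apply pow_lt; lra).
    assert (Habs : Rabs (INR M ^ j * (t - t')) < 1) by (apply Rabs_def1; lra).
    rewrite Rabs_mult, (Rabs_pos_eq (INR M ^ j)) in Habs by lra.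
    apply (Rmult_lt_reg_l (INR M ^ j)); auto. rewrite Rinv_r; lra. }
  assert (HJ : exists J, F M t J <> F M t' J).
  { destruct (archimed (/ Rabs (t - t'))) as [Hup _].
    set (J := Z.to_nat (up (/ Rabs (t - t')))).
    assert (HJ : / Rabs (t - t') < INR J).
    { unfold J. assert (0 < / Rabs (t - t')) by (apply Rinv_0_lt_compat; auto).
      rewrite INR_IZR_INZ, Z2Nat.id; auto. apply le_IZR. lra. }
    exists J. intros Heq. specialize (Hclose J Heq).
    pose proof (pow_ge_nat (INR M) J HM2).
    assert (HMj : 0 < INR M ^ J) by (apply pow_lt; lra).
    assert (Rabs (t - t') * INR M ^ J < 1).
    { apply (Rmult_lt_compat_r (INR M ^ J)) in Hclose; auto. rewrite Rinv_l in Hclose; lra. }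
    assert (1 < Rabs (t - t') * INR J).
    { apply (Rmult_lt_compat_l (Rabs (t - t'))) in HJ; auto. rewrite Rinv_r in HJ; lra. }
    nra. }
  destruct HJ as [J HJ].
  destruct (first_split (F M t) (F M t') ltac:(rewrite !F0; auto) J HJ) as (j & Hj & Hj1).
  exists j. split; [auto|].
  pose proof (gmap_bounds _ _ _ _ t HH (S j)) as G1.
  pose proof (gmap_bounds _ _ _ _ t' HH (S j)) as G2.
  unfold path in G1, G2.
  assert (HM1 : (1 <= M)%nat) by (apply (Nat.le_trans _ 2); [repeat constructor|exact HM]).
  assert (Hq1 : (F M t (S j) / Z.of_nat M)%Z = F M t j) by (apply F_div; exact HM1).
  assert (Hq2 : (F M t' (S j) / Z.of_nat M)%Z = F M t j) by (rewrite (F_div M t' j HM1); auto).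
  pose proof (node_sep _ _ _ _ HH j (F M t j) (F M t (S j)) (F M t' (S j)) _ _
     Hq1 Hq2 Hj1 G1 G2) as Hs.
  destruct (node_props _ _ _ _ HH j (F M t j)) as [_ Hlen].
  set (A := Aof eps M) in *.
  set (L := snd (node xi eps a M j (F M t j)) - fst (node xi eps a M j (F M t j))) in *.
  set (D := Rabs (gmap xi eps a M t - gmap xi eps a M t')) in *.
  assert (H8 : 0 < 8 * A) by lra.
  assert (H8j : 0 < (8 * A) ^ j) by (apply pow_lt; lra).
  assert (HL : eps / xi * / (8 * A) ^ j <= L).
  { apply (Rmult_le_reg_l ((8 * A) ^ j)); auto. replace ((8 * A) ^ j * (eps / xi * / (8 * A) ^ j)) with (eps / xi) by (field; lra). exact Hlen. }
  apply Rle_trans with ((1 - eps) * L / (8 * A)).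
  - replace ((1 - eps) * (eps / xi) / (8 * A) * / (8 * A) ^ j) with (((1 - eps) / (8 * A)) * (eps / xi * / (8 * A) ^ j)) by (unfold Rdiv; ring).
    replace ((1 - eps) * L / (8 * A)) with (((1 - eps) / (8 * A)) * L) by (unfold Rdiv; ring).
    apply Rmult_le_compat_l; [apply Rdiv_le_0_compat; lra|exact HL].
  - apply (Rmult_le_reg_l (8 * A)); auto. replace (8 * A * ((1 - eps) * L / (8 * A))) with ((1 - eps) * L) by (field; lra). exact Hs.
Qed.

Lemma gmap_holder xi eps a M s t t' : Hyp xi eps a M -> 0 <= s ->
  / INR M <= Rpower (/ (8 * Aof eps M)) s ->
  0 <= t < 1 -> 0 <= t' < 1 -> t <> t' ->
  gmap xi eps a M t <> gmap xi eps a M t' /\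
  Rabs (t - t') <= / Rpower ((1 - eps) * (eps / xi) / (8 * Aof eps M)) s *
                   Rpower (Rabs (gmap xi eps a M t - gmap xi eps a M t')) s.
Proof.
  intros HH Hs Hsig Ht Ht' Hne.
  pose proof (Hyp_facts _ _ _ _ HH) as (HA1 & _ & _ & HM0).
  pose proof HH as (Hxi & Heps & Ha & HM & HxA).
  destruct (gmap_sep _ _ _ _ t t' HH Ht Ht' Hne) as (j & Hj1 & Hj2).
  set (A := Aof eps M) in *.
  set (c := (1 - eps) * (eps / xi) / (8 * A)) in *.
  set (D := Rabs (gmap xi eps a M t - gmap xi eps a M t')) in *.
  assert (Hc : 0 < c).
  { unfold c. apply Rdiv_lt_0_compat; [|lra]. apply Rmult_lt_0_compat; [lra|]. apply Rdiv_lt_0_compat; lra. }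
  assert (H8 : 0 < / (8 * A)) by (apply Rinv_0_lt_compat; lra).
  assert (Hsj : 0 < / (8 * A) ^ j) by (apply Rinv_0_lt_compat, pow_lt; lra).
  assert (HcD : 0 < c * / (8 * A) ^ j) by (apply Rmult_lt_0_compat; auto).
  assert (HD : 0 < D) by lra.
  split.
  { intros Heq. unfold D in HD. rewrite Heq, Rminus_diag, Rabs_R0 in HD. lra. }
  assert (Hp1 : Rpower (c * / (8 * A) ^ j) s <= Rpower D s) by (apply Rle_Rpower_l; lra).
  rewrite <- Rpower_mult_distr in Hp1 by auto.
  assert (Hp2 : Rpower (/ (8 * A) ^ j) s = (Rpower (/ (8 * A)) s) ^ j).
  { rewrite <- pow_inv. rewrite <- (Rpower_pow j (/ (8 * A))) by auto.
    rewrite <- (Rpower_pow j (Rpower (/ (8 * A)) s)) by (unfold Rpower; apply exp_pos).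
    rewrite !Rpower_mult. f_equal. ring. }
  assert (Hp3 : / INR M ^ j <= (Rpower (/ (8 * A)) s) ^ j).
  { rewrite <- pow_inv. apply pow_incr. split; auto. left; apply Rinv_0_lt_compat; auto. }
  assert (Hcs : 0 < Rpower c s) by (unfold Rpower; apply exp_pos).
  apply Rle_trans with (/ INR M ^ j); [lra|].
  apply (Rmult_le_reg_l (Rpower c s)); auto.
  rewrite <- Rmult_assoc, Rinv_r, Rmult_1_l by lra.
  rewrite Hp2 in Hp1.
  apply Rle_trans with (Rpower c s * Rpower (/ (8 * A)) s ^ j); [|auto].
  apply Rmult_le_compat_l; lra.
Qed.


Lemma choose_M xi eps s : 0 < xi -> 0 < eps < 1 -> 0 <= s < 1 ->
  exists M, (2 <= M)%nat /\ 2 <= xi * Aof eps M /\ / INR M <= Rpower (/ (8 * Aof eps M)) s.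
Proof.
  intros Hxi Heps Hs.
  set (X := s * ln (16 / eps) / (1 - s)).
  set (Y := Rmax 2 (Rmax (2 / xi) (exp X))).
  destruct (archimed Y) as [HY _].
  assert (HY2 : 2 <= Y) by apply Rmax_l.
  assert (HYx : 2 / xi <= Y) by (eapply Rle_trans; [apply Rmax_l|apply Rmax_r]).
  assert (HYe : exp X <= Y) by (eapply Rle_trans; [apply Rmax_r|apply Rmax_r]).
  set (M := Z.to_nat (up Y)).
  assert (HMY : Y < INR M).
  { unfold M. rewrite INR_IZR_INZ, Z2Nat.id; [lra|]. apply le_IZR. lra. }
  exists M.
  assert (HA : Aof eps M = (INR M + 1) / eps) by reflexivity.
  assert (HAM : INR M + 1 <= Aof eps M).
  { rewrite HA. unfold Rdiv. rewrite <- (Rmult_1_r (INR M + 1)) at 1. apply Rmult_le_compat_l; [lra|].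
    rewrite <- Rinv_1. apply Rinv_le_contravar; lra. }
  split; [|split].
  - assert (INR 1 < INR M) by (simpl; lra). apply INR_lt in H. lia.
  - apply Rle_trans with (xi * (2 / xi)); [right; field; lra|]. apply Rmult_le_compat_l; lra.
  - assert (HM0 : 0 < INR M) by lra.
    assert (HA0 : 0 < 8 * Aof eps M) by lra.
    unfold Rpower. rewrite ln_Rinv by auto. rewrite <- (exp_ln (/ INR M)) by (apply Rinv_0_lt_compat; auto).
    rewrite ln_Rinv by auto. apply exp_mono_le.
    assert (H8A : 8 * Aof eps M <= INR M * (16 / eps)).
    { rewrite HA. unfold Rdiv. replace (INR M * (16 * / eps)) with (16 * INR M * / eps) by ring.
      replace (8 * ((INR M + 1) * / eps)) with (8 * (INR M + 1) * / eps) by ring.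
      apply Rmult_le_compat_r; [left; apply Rinv_0_lt_compat; lra|lra]. }
    assert (Hln : ln (8 * Aof eps M) <= ln (INR M) + ln (16 / eps)).
    { rewrite <- ln_mult; [apply ln_le; auto|auto|apply Rdiv_lt_0_compat; lra]. }
    assert (HlnM : X <= ln (INR M)).
    { rewrite <- (ln_exp X). apply ln_le; [apply exp_pos|lra]. }
    assert (HX : s * ln (16 / eps) <= (1 - s) * ln (INR M)).
    { unfold X in HlnM. apply (Rmult_le_compat_l (1 - s)) in HlnM; [|lra].
      replace ((1 - s) * (s * ln (16 / eps) / (1 - s))) with (s * ln (16 / eps)) in HlnM by (field; lra). exact HlnM. }
    assert (s * ln (8 * Aof eps M) <= s * (ln (INR M) + ln (16 / eps))) by (apply Rmult_le_compat_l; lra).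
    lra.
Qed.

Lemma sum_n_scal (K : R) (f : nat -> R) N : @eq R (sum_n (fun n => K * f n) N) (K * sum_n f N).
Proof.
  induction N; [rewrite !sum_O; reflexivity|]. rewrite !sum_Sn, IHN. change plus with Rplus. ring.
Qed.

Definition Eset (xi eps : R) (a : nat -> R) : R -> Prop :=
  fun alpha => forall n : nat, (1 <= n)%nat -> a n <= frac_part (xi * alpha ^ n) <= a n + eps.

Theorem measure_pos_lt1 xi eps a s : 0 < xi -> 0 < eps < 1 ->
  (forall n, (1 <= n)%nat -> 0 <= a n < 1 - eps) -> 0 <= s < 1 ->
  hausdorff_measure s (Eset xi eps a) <> Finite 0.
Proof.
  intros Hxi Heps Ha Hs.
  destruct (choose_M xi eps s Hxi Heps Hs) as (M & HM & HxA & Hsig).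
  assert (HH : Hyp xi eps a M) by exact (conj Hxi (conj Heps (conj Ha (conj HM HxA)))).
  pose proof (Hyp_facts _ _ _ _ HH) as (HA1 & _ & _ & HM0).
  set (A := Aof eps M) in *.
  set (c := (1 - eps) * (eps / xi) / (8 * A)).
  assert (Hc : 0 < c).
  { unfold c. apply Rdiv_lt_0_compat; [|lra]. apply Rmult_lt_0_compat; [lra|]. apply Rdiv_lt_0_compat; lra. }
  set (Cst := / Rpower c s).
  assert (HCst : 0 < Cst) by (unfold Cst; apply Rinv_0_lt_compat; unfold Rpower; apply exp_pos).
  set (g := gmap xi eps a M).
  assert (Hcont : forall v, (exists U, delta_cover (Eset xi eps a) 1 U /\ Finite v = nonneg_sum (fun n => diam_pow (U n) s)) -> / 4 <= Cst * v).
  { intros v (U & [Hdiam Hcov] & Hv).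
    apply (cover_lemma (fun n => Cst * diam_pow (U n) s) (fun n t => (0 <= t < 1) /\ U n (g t))).
    - intros n. apply Rmult_le_pos; [lra|apply diam_pow_nonneg].
    - intros n x y [Hx HUx] [Hy HUy]. destruct (Req_dec x y) as [->|Hne].
      + rewrite Rminus_diag, Rabs_R0. apply Rmult_le_pos; [lra|apply diam_pow_nonneg].
      + destruct (gmap_holder xi eps a M s x y HH (proj1 Hs) Hsig Hx Hy Hne) as [Hgne Hhol].
        fold A c Cst g in Hhol, Hgne.
        apply Rle_trans with (1 := Hhol). apply Rmult_le_compat_l; [lra|].
        apply diam_pow_ge; auto. lra.
    - intros t Ht. assert (Ht' : 0 <= t < 1) by lra.
      destruct (Hcov (g t)) as [n Hn]. { intros k Hk. apply gmap_in_E; auto. }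
      exists n. auto.
    - intros N. rewrite sum_n_scal. apply Rmult_le_compat_l; [lra|].
      apply nonneg_sum_partial; auto. intros; apply diam_pow_nonneg. }
  assert (Hlow : Rbar_le (Finite (/ (4 * Cst))) (hausdorff_content s 1 (Eset xi eps a))).
  { unfold hausdorff_content. destruct (Glb_Rbar_correct (fun v => exists U, delta_cover (Eset xi eps a) 1 U /\ Finite v = nonneg_sum (fun n => diam_pow (U n) s))) as [_ Hg].
    apply Hg. intros v Hv. specialize (Hcont v Hv). simpl.
    apply (Rmult_le_reg_l (4 * Cst)); [lra|]. rewrite Rinv_r by lra. lra. }
  intros Hmeas. unfold hausdorff_measure in Hmeas.
  destruct (Lub_Rbar_correct (fun v => exists delta, 0 < delta /\ Rbar_le (Finite v) (hausdorff_content s delta (Eset xi eps a)))) as [Hub _].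
  rewrite Hmeas in Hub.
  assert (Hin : Rbar_le (Finite (/ (4 * Cst))) (Finite 0)).
  { apply Hub. exists 1. split; [lra|exact Hlow]. }
  simpl in Hin. assert (0 < / (4 * Cst)) by (apply Rinv_0_lt_compat; lra). lra.
Qed.


Theorem theorem3 (xi eps : R) (a : nat -> R) :
  0 < xi -> 0 < eps < 1 ->
  (forall n : nat, (1 <= n)%nat -> 0 <= a n < 1 - eps) ->
  hausdorff_dim
    (fun alpha : R => forall n : nat, (1 <= n)%nat ->
       a n <= frac_part (xi * alpha ^ n) <= a n + eps)
  = Finite 1.
Proof.
  intros Hxi Heps Ha.
  change (fun alpha : R => forall n : nat, (1 <= n)%nat -> a n <= frac_part (xi * alpha ^ n) <= a n + eps)
    with (Eset xi eps a).
  unfold hausdorff_dim. apply is_glb_Rbar_unique. split.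
  - intros s [Hs0 Hs]. simpl. destruct (Rlt_le_dec s 1) as [Hlt|]; auto.
    exfalso. exact (measure_pos_lt1 xi eps a s Hxi Heps Ha (conj Hs0 Hlt) Hs).
  - intros b Hb.
    assert (Hin : forall s, 1 < s -> Rbar_le b (Finite s)).
    { intros s Hs. apply Hb. split; [lra|]. apply measure_zero_gt1; auto. }
    destruct b as [b| |]; simpl; auto.
    + destruct (Rle_lt_dec b 1) as [|Hb1]; auto.
      specialize (Hin ((b + 1) / 2) ltac:(lra)). simpl in Hin. lra.
    + specialize (Hin 2 ltac:(lra)). simpl in Hin. auto.
Qed.
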